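(* Let $n,d\ge1$ and let $W$ be a word over a totally ordered alphabet. If $W$ contains $n$ pairwise non-overlapping occurrences of the same word $u$ of length $nd$, then $W$ is $(n,d)$-reducible.
   Context: A subword is a contiguous factor. Two words $u,v$ are comparable if neither is a prefix of the other; for comparable $u,v$ write $u\succ v$ if at the first position where they differ the letter of $u$ is larger. $W$ is $n$-divisible if it contains a subword $u_1\cdots u_n$ with nonempty $u_i$ and $u_1\succ\dots\succ u_n$. $W$ is $(n,d)$-reducible if it is $n$-divisible or contains a subword $u^d$ with $u$ nonempty. *)

(* Defs.v *)
From mathcomp Require Import all_boot all_order.
Set Implicit Arguments. Unset Strict Implicit. Unset Printing Implicit Defensive.
Import Order.TTheory.

Section Words.
Variables (disp : Order.disp_t) (T : orderType disp).

Definition comparable_w (u v : seq T) : bool := ~~ prefix u v && ~~ prefix v u.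

Fixpoint first_diff_gt (u v : seq T) : bool :=
  match u, v with
  | x :: u', y :: v' => if x == y then first_diff_gt u' v' else (y < x)%O
  | _, _ => false
  end.

Definition succ_w (u v : seq T) : bool := comparable_w u v && first_diff_gt u v.

Definition n_divisible (n : nat) (W : seq T) : Prop :=
  exists us : seq (seq T),
    [/\ size us = n, all (fun u => u != [::]) us, sorted succ_w us
      & infix (flatten us) W].

Definition nd_reducible (n d : nat) (W : seq T) : Prop :=
  n_divisible n W \/
  exists u : seq T, u != [::] /\ infix (flatten (nseq d u)) W.

Definition occurs_at (u W : seq T) (i : nat) : bool :=
  (i + size u <= size W) && (take (size u) (drop i W) == u).

End Words.

(* Main.v *)
Require Import Defs.
From mathcomp Require Import all_boot all_order.
From mathcomp Require Import zify.
Set Implicit Arguments. Unset Strict Implicit. Unset Printing Implicit Defensive.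
Import Order.TTheory.

Section Aux.
Variables (disp : Order.disp_t) (T : orderType disp).
Implicit Types u v w : seq T.

Local Notation fdg := (@first_diff_gt disp T).

Lemma fdg_trans u v w : fdg u v -> fdg v w -> fdg u w.
Proof.
elim: u v w => [|x u IH] [|y v] [|z w] //=.
case: (eqVneq x y) => [->|nxy]; case: (eqVneq y z) => [E|nyz] //=.
- exact: IH.
- by move=> h1 _; rewrite -E (negbTE nxy).
- move=> h1 h2; case: (eqVneq x z) => [exz|_]; last exact: lt_trans h2 h1.
  by subst; move: (lt_trans h2 h1); rewrite ltxx.
Qed.

Lemma fdg_cat u v a b : fdg u v -> fdg (u ++ a) (v ++ b).
Proof.
elim: u v => [|x u IH] [|y v] //=.
by case: ifP => // _; apply: IH.
Qed.

Lemma fdg_comp u v : fdg u v -> comparable_w u v.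
Proof.
rewrite /comparable_w.
elim: u v => [|x u IH] [|y v] //=.
case: (eqVneq x y) => [E|nxy]; first subst x.
  by move=> /IH.
by [].
Qed.

Lemma comp_total u v : comparable_w u v -> fdg u v || fdg v u.
Proof.
rewrite /comparable_w.
elim: u v => [|x u IH] [|y v] //=.
case: (eqVneq x y) => [E|nxy] /=; first subst x.
  by apply: IH.
by move=> _; case: (ltgtP x y) nxy => //= ->.
Qed.

Lemma prefix_size u v : prefix u v -> size u <= size v.
Proof. by move=> /prefixP[r ->]; rewrite size_cat leq_addr. Qed.

Lemma prefix_shorter a b v : prefix a v -> prefix b v -> size a <= size b ->
  prefix a b.
Proof.
rewrite !prefixE => /eqP ha /eqP hb hs.
by rewrite -hb take_takel // ha.
Qed.

Lemma size_flatten_nseq k (x : seq T) : size (flatten (nseq k x)) = k * size x.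
Proof. by elim: k => //= k IH; rewrite size_cat IH mulSn. Qed.

Lemma period_pow v p k : prefix (drop p v) v -> k * p <= size v ->
  prefix (flatten (nseq k (take p v))) v.
Proof.
move=> hper; elim: k => [|k IH] hk; first by rewrite prefix0s.
have hp : p <= size v by apply: leq_trans hk; rewrite mulSn leq_addr.
have hk' : k * p <= size v by apply: leq_trans hk; rewrite mulSn leq_addl.
rewrite /= -[X in prefix _ X](cat_take_drop p v) prefix_catr // eqxx /=.
apply: prefix_shorter (IH hk') hper _.
rewrite size_flatten_nseq size_take_min size_drop.
rewrite (minn_idPl hp) leq_subRL // -mulSn.
Qed.

Definition fac (W : seq T) a b := drop a (take b W).

Lemma drop_cat_le a (s1 s2 : seq T) : a <= size s1 -> drop a (s1 ++ s2) = drop a s1 ++ s2.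
Proof.
move=> h; rewrite drop_cat; case: ltnP => // h2.
have -> : a = size s1 by apply/eqP; rewrite eqn_leq h h2.
by rewrite subnn drop0 drop_size.
Qed.

Lemma fac_cat W a b c : a <= b -> b <= c -> c <= size W ->
  fac W a b ++ fac W b c = fac W a c.
Proof.
move=> hab hbc hc; rewrite /fac.
rewrite -{2}(cat_take_drop b (take c W)) take_takel //.
rewrite drop_cat_le // size_take_min; lia.
Qed.

Lemma fac_infix W a b : infix (fac W a b) W.
Proof.
rewrite /fac -{2}(cat_take_drop b W) -{2}(cat_take_drop a (take b W)) -catA.
exact: infix_infix.
Qed.

Lemma occ_fac u W p : occurs_at u W p -> fac W p (p + size u) = u.
Proof.
by case/andP=> _ /eqP; rewrite take_drop addnC.
Qed.

Lemma path_uniq (S : eqType) (R : rel S) x s :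
  path (fun a b => (a == b) || R a b) x s -> uniq (x :: s) -> path R x s.
Proof.
elim: s x => [|y s IH] x //= /andP[hxy hp] /andP[hx hu].
rewrite in_cons negb_or in hx; case/andP: hx => hxy' _.
rewrite (negbTE hxy') /= in hxy; rewrite hxy /=.
exact: IH.
Qed.

Lemma last_ge (N : nat) p1 ps : path (fun i j => i + N <= j) p1 ps -> p1 <= last p1 ps.
Proof.
elim: ps p1 => [|q ps IH] p1 //= /andP[h1 h2].
apply: leq_trans (IH _ h2); lia.
Qed.

Lemma chain u W ps : forall p0 s0 sl, size ps = size sl ->
  all (occurs_at u W) (p0 :: ps) ->
  sorted (fun i j => i + size u <= j) (p0 :: ps) ->
  all (fun s => s < size u) (s0 :: sl) ->
  sorted (fun i j => fdg (drop i u) (drop j u)) (s0 :: sl) ->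
  exists us, [/\ size us = (size ps).+1, all (fun x => x != [::]) us,
    sorted (@succ_w disp T) us,
    flatten us = fac W (p0 + s0) (last p0 ps + size u)
    & exists r, head [::] us = drop s0 u ++ r].
Proof.
elim: ps => [|p1 ps IH] p0 s0 [|s1 sl] //=.
- move=> _ /andP[ho _] _ /andP[hs _] _.
  exists [:: drop s0 u]; split => //=.
  + by rewrite andbT -size_eq0 size_drop subn_eq0 -ltnNge.
  + rewrite cats0 /fac addnC -drop_drop -/(fac W p0 (p0 + size u)).
    by rewrite occ_fac.
  + by exists [::]; rewrite cats0.
- move=> [hsz] /andP[ho0 hall] /andP[hg hsort] /andP[hs0 hsall] /andP[hf hfs].
  have [us [h1 h2 h3 h4 [r h5]]] := IH p1 s1 sl hsz hall hsort hsall hfs.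
  have hlast : last p1 ps + size u <= size W.
    have hall2 : all (occurs_at u W) (p1 :: ps) := hall.
    by move: (mem_last p1 ps) => /(allP hall2) /andP[].
  case/andP: hall => ho1 hall'.
  have hl1 := last_ge hsort.
  case/andP: hsall => hs1 _.
  have hpiece : fac W (p0 + s0) (p1 + s1) =
      drop s0 u ++ fac W (p0 + size u) (p1 + s1).
    rewrite -(fac_cat (b := p0 + size u)); try lia.
    by rewrite /fac addnC -drop_drop -/(fac W p0 (p0 + size u)) occ_fac.
  exists (fac W (p0 + s0) (p1 + s1) :: us); split => //=.
  + by rewrite h1.
  + by rewrite h2 andbT hpiece -size_eq0 size_cat size_drop addn_eq0 subn_eq0 leqNgt hs0.
  + case: us h1 h3 h4 h5 {h2} => // h us' _ h3 h4 /= h5.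
    have h3p : path (@succ_w disp T) h us' := h3.
    rewrite h3p andbT /succ_w; subst h.
    have hh : fdg (fac W (p0 + s0) (p1 + s1)) (drop s1 u ++ r).
      by rewrite hpiece; apply: fdg_cat.
    by rewrite hh fdg_comp.
  + rewrite h4 fac_cat //; lia.
  + by exists (fac W (p0 + size u) (p1 + s1)).
Qed.

End Aux.

Theorem lemmac (disp : Order.disp_t) (T : orderType disp) (n d : nat)
  (W u : seq T) :
  0 < n -> 0 < d -> size u = n * d ->
  (exists ps : seq nat,
     [/\ size ps = n, all (occurs_at u W) ps
       & sorted (fun i j => i + size u <= j) ps]) ->
  nd_reducible n d W.
Proof.
move=> n0 d0 hsz [[|p0 ps] [hps hocc hsort]]; first by rewrite -hps in n0.
have hnN : n <= size u by rewrite hsz leq_pmulr.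
have ho0 : occurs_at u W p0 by case/andP: hocc.
have hu : infix u W by rewrite -(occ_fac ho0); exact: fac_infix.
case: (boolP (has (fun j => has (fun i => prefix (drop j u) (drop i u)) (iota 0 j))
   (iota 0 n))).
- case/hasP => j; rewrite mem_iota add0n => /andP[_ hj] /hasP[i].
  rewrite mem_iota add0n => /andP[_ hij] hpre.
  right; exists (take (j - i) (drop i u)); split.
  + rewrite -size_eq0 size_take_min size_drop; rewrite hsz; apply/eqP; nia.
  + apply: infix_trans hu; apply: (@infix_trans _ (drop i u)).
      apply: prefixW; apply: period_pow.
        by rewrite drop_drop subnK // ltnW.
      rewrite size_drop hsz; nia.
    by rewrite -[X in infix _ X](cat_take_drop i u); exact: suffix_infix.
- move=> hnot; left.
  have hcomp : forall i j, i < j -> j < n -> comparable_w (drop i u) (drop j u).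
    move=> i j hij hjn; rewrite /comparable_w; apply/andP; split.
      apply/negP => /prefix_size; rewrite !size_drop; lia.
    apply/negP => hp; move/negP: hnot; apply; apply/hasP; exists j.
      by rewrite mem_iota add0n.
    by apply/hasP; exists i => //; rewrite mem_iota add0n.
  pose R := fun i j => (i == j) || first_diff_gt (drop i u) (drop j u).
  have htot : {in (fun x => x < n) &, total R}.
    move=> i j hi hj; rewrite /R; case: (ltngtP i j) => [hij|hij|->]; last by rewrite ?eqxx.
      by case/orP: (comp_total (hcomp _ _ hij hj)) => ->; rewrite !orbT.
    have := hcomp _ _ hij hi; rewrite /comparable_w andbC => /comp_total.
    by case/orP => ->; rewrite !orbT.
  have hall : all (fun x => x < n) (iota 0 n).
    by apply/allP => x; rewrite mem_iota add0n.
  have hs := sort_sorted_in htot hall.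
  have hun : uniq (sort R (iota 0 n)) by rewrite sort_uniq iota_uniq.
  have hsl := size_sort R (iota 0 n); rewrite size_iota in hsl.
  have hmem : all (fun x => x < size u) (sort R (iota 0 n)).
    apply/allP => x; rewrite mem_sort mem_iota add0n => hx; lia.
  move: hs hun hsl hmem; case: (sort R (iota 0 n)) => [|s0 sl] //=.
    by move=> _ _ hn; rewrite -hn in n0.
  move=> hs hun hsl hmem.
  have hfs := path_uniq hs hun.
  have [us [h1 h2 h3 h4 _]] := chain (W := W) (u := u) (ps := ps) (p0 := p0)
    (s0 := s0) (sl := sl) ltac:(apply/eqP; rewrite -eqSS; apply/eqP; by rewrite hsl -hps) hocc hsort hmem hfs.
  exists us; split => //; first by rewrite h1.
  by rewrite h4; exact: fac_infix.
Qed.
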